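(* Let $n\ge 2$, let $A\in\mathbb{R}^{n\times n}$ be symmetric positive definite, $B=A^{1/2}$, $E=\{x: x^{\top}A^{-1}x=1\}$, fix $x_0$ with $x_0^{\top}A^{-1}x_0=1$ and set $y_0=B^{-1}x_0\in S^{n-1}$. For every parallelepiped $P$ inscribed in $E$ having $x_0$ as a vertex, \[ L(P)\le 2^n\sqrt{\operatorname{tr}(A)}. \] Moreover, write the edge vectors of $P$, with signs chosen so that $x_0=\tfrac12\sum_i v_i$, as $v_i=\lambda_iBu_i$ with $\lambda_i>0$ and $U=[u_1\ \cdots\ u_n]\in O(n)$. Then equality holds if and only if, writing $z:=U^{\top}y_0$, \[ \operatorname{diag}\big(U^{\top}AU\big)=\operatorname{tr}(A)\,z\odot z\quad\text{and}\quad \lambda_i=2z_i\ (i=1,\dots,n). \]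
   Context: A (centred, $n$-dimensional) parallelepiped with linearly independent edge vectors $v_1,\dots,v_n$ is $P=\{\sum_i t_iv_i:|t_i|\le\tfrac12\}$ with vertices $\tfrac12\sum_i\varepsilon_iv_i$, $\varepsilon\in\{\pm1\}^n$; it is inscribed in $E$ if all vertices satisfy $x^{\top}A^{-1}x=1$. For such inscribed $P$, the vectors $B^{-1}v_i$ are pairwise orthogonal, so they can be written as $\lambda_iu_i$ with $U\in O(n)$, $\lambda_i=\|B^{-1}v_i\|$. $L(P)=2^{n-1}\sum_i\|v_i\|$ is the total edge length. $\odot$ is the componentwise (Hadamard) product and $\operatorname{diag}(M)$ the vector of diagonal entries of $M$. *)

(* Defs.v *)
(* Reals are modelled by an arbitrary real closed field R
   (the statement is purely algebraic; R = the reals is an instance). *)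
From HB Require Import structures.
From mathcomp Require Import all_boot all_order all_algebra.
Set Implicit Arguments. Unset Strict Implicit. Unset Printing Implicit Defensive.
Import Order.TTheory GRing.Theory Num.Theory.
Local Open Scope ring_scope.

Section Defs.
Variables (R : rcfType) (n : nat).

Definition qform (M : 'M[R]_n) (x : 'cV[R]_n) : R := (x^T *m M *m x) 0 0.

Definition spd (M : 'M[R]_n) : Prop :=
  M^T = M /\ forall x : 'cV[R]_n, x != 0 -> 0 < qform M x.

Definition vnorm (x : 'cV[R]_n) : R := Num.sqrt (\sum_i x i 0 ^+ 2).

Definition orthogonal_mx (U : 'M[R]_n) : Prop := U^T *m U = 1%:M.

(* The parallelepiped with edge vectors v_i = col i V has vertices
   1/2 * sum_i eps_i v_i, eps_i = (-1)^(e i). *)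
Definition vertex (V : 'M[R]_n) (e : 'I_n -> bool) : 'cV[R]_n :=
  2^-1 *: \sum_i ((-1) ^+ e i) *: col i V.

Definition inscribed (A V : 'M[R]_n) : Prop :=
  forall e : 'I_n -> bool, qform (invmx A) (vertex V e) = 1.

Definition edge_length (V : 'M[R]_n) : R :=
  2 ^+ n.-1 * \sum_i vnorm (col i V).

End Defs.

(* Main.v *)
Require Import Defs.
From HB Require Import structures.
From mathcomp Require Import all_boot all_order all_algebra.
From mathcomp Require Import ring lra.
Import Order.TTheory GRing.Theory Num.Theory.
Local Open Scope ring_scope.

Section H.
Variable R : rcfType.

Lemma dE n (M : 'M[R]_n) i j :
  ((@delta_mx R n 1 i 0)^T *m M *m @delta_mx R n 1 j 0) 0 0 = M i j.
Proof.
rewrite trmx_delta -rowE -colE !mxE; done.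
Qed.

Lemma nrm2E n (x : 'cV[R]_n) : (x^T *m x) 0 0 = \sum_i x i 0 ^+ 2.
Proof. rewrite mxE; apply: eq_bigr => i _; rewrite mxE expr2 //. Qed.

Lemma mulmx_col n (V : 'M[R]_n) (s : 'cV[R]_n) :
  V *m s = \sum_i s i 0 *: col i V.
Proof.
apply/matrixP => a b; rewrite summxE !mxE; apply: eq_bigr => i _.
by rewrite !mxE (ord1 b) mulrC.
Qed.

Lemma cs_lemma n (l s : 'I_n -> R) (T : R) : 0 < T ->
  \sum_i l i ^+ 2 = 4 -> \sum_i s i ^+ 2 = T ->
  (forall i, 0 <= l i) -> (forall i, 0 <= s i) ->
  \sum_i l i * s i <= 2 * Num.sqrt T /\
  (\sum_i l i * s i = 2 * Num.sqrt T <-> forall i, s i = Num.sqrt T / 2 * l i).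
Proof.
move=> T0 hl hs l0 s0.
have [k kdef] : exists k, k = Num.sqrt T / 2 by eexists.
rewrite -kdef.
have k0 : 0 < k by rewrite kdef divr_gt0 // sqrtr_gt0.
have kk : k ^+ 2 = T / 4.
  by rewrite kdef expr_div_n sqr_sqrtr ?ltW //; congr (_ / _); rewrite expr2 -natrM.
have hid : \sum_i (k * l i - s i) ^+ 2 = 2 * k * (2 * Num.sqrt T - \sum_i l i * s i).
  have -> : \sum_i (k * l i - s i) ^+ 2 =
            k ^+ 2 * \sum_i l i ^+ 2 - 2 * k * \sum_i l i * s i + \sum_i s i ^+ 2.
    rewrite !mulr_sumr -sumrB -big_split /=; apply: eq_bigr => i _. ring.
  rewrite hl hs kk.
  have -> : Num.sqrt T = 2 * k by rewrite kdef; field.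
  have : T = 4 * k^+2 by rewrite kk; field.
  by move=> ->; field.
have hge : 0 <= \sum_i (k * l i - s i) ^+ 2 by apply: sumr_ge0 => i _; exact: sqr_ge0.
split.
  rewrite hid in hge.
  have : 0 <= 2 * Num.sqrt T - \sum_i l i * s i.
    by rewrite -(pmulr_rge0 _ (_ : 0 < 2 * k)) // mulr_gt0.
  lra.
split.
  move=> heq i.
  have h0 : \sum_i (k * l i - s i) ^+ 2 = 0 by rewrite hid heq subrr mulr0.
  have := @psumr_eq0P _ _ _ _ (fun i _ => sqr_ge0 (k * l i - s i)) h0 i isT.
  move/eqP; rewrite sqrf_eq0 subr_eq0 => /eqP ->; done.
move=> hi.
have h0 : \sum_i (k * l i - s i) ^+ 2 = 0.
  by rewrite big1 // => i _; rewrite hi subrr expr0n.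
move: hid; rewrite h0 => /esym /eqP; rewrite mulf_eq0 subr_eq0 => /orP [|/eqP -> //].
rewrite mulf_eq0 pnatr_eq0 /= => /eqP k00; move: k0; rewrite k00 ltxx //.
Qed.
End H.


Section M.
Variable R : rcfType.

Lemma vnorm_sq n (x : 'cV[R]_n) : vnorm x ^+ 2 = (x^T *m x) 0 0.
Proof.
rewrite /vnorm nrm2E sqr_sqrtr //; apply: sumr_ge0 => i _; exact: sqr_ge0.
Qed.

Lemma vnorm_ge0 n (x : 'cV[R]_n) : 0 <= vnorm x.
Proof. exact: sqrtr_ge0. Qed.

Lemma vnormZ n (c : R) (x : 'cV[R]_n) : 0 <= c -> vnorm (c *: x) = c * vnorm x.
Proof.
move=> c0; rewrite /vnorm.
have -> : \sum_i (c *: x) i 0 ^+ 2 = c ^+ 2 * \sum_i x i 0 ^+ 2.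
  by rewrite mulr_sumr; apply: eq_bigr => i _; rewrite mxE exprMn.
rewrite sqrtrM ?sqr_ge0 // sqrtr_sqr ger0_norm //.
Qed.

Lemma sBU n (A B U : 'M[R]_n) i : B^T = B -> B *m B = A ->
  ((B *m col i U)^T *m (B *m col i U)) 0 0 = (U^T *m A *m U) i i.
Proof.
move=> hBt hA.
rewrite -(@dE _ _ (U^T *m A *m U)) colE trmx_mul trmx_mul hBt.
by rewrite -hA !mulmxA.
Qed.

Lemma trace_orth n (A U : 'M[R]_n) : U^T *m U = 1%:M ->
  \sum_i (U^T *m A *m U) i i = \tr A.
Proof.
move=> hU; rewrite -/(mxtrace _) mxtrace_mulC mulmxA (mulmx1C hU) mul1mx //.
Qed.

End M.

Section S.
Variables (R : rcfType) (n : nat) (A B : 'M[R]_n).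
Hypotheses (hn : (2 <= n)%N) (hA : spd A) (hB : spd B) (hBA : B *m B = A).

Lemma Bt : B^T = B. Proof. by case: hB. Qed.

Lemma delta_neq0 (i : 'I_n) : (delta_mx i 0 : 'cV[R]_n) != 0.
Proof.
apply/eqP => /matrixP /(_ i 0); rewrite !mxE !eqxx /= => /eqP; rewrite oner_eq0 //.
Qed.

Lemma Bunit : B \in unitmx.
Proof.
rewrite -row_free_unit; apply/inj_row_free => v hv; apply/eqP; apply: contraT => hv0.
have hv0' : v^T != 0 by rewrite trmx_eq0.
have := hB.2 _ hv0'; rewrite /qform trmxK hv mul0mx mxE.
by rewrite ltxx.
Qed.

Local Notation C := (invmx B).
Lemma CB : C *m B = 1%:M. Proof. exact: mulVmx Bunit. Qed.
Lemma BC : B *m C = 1%:M. Proof. exact: mulmxV Bunit. Qed.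
Lemma Ct : C^T = C. Proof. by rewrite trmx_inv Bt. Qed.

Lemma invA : invmx A = C *m C.
Proof.
have Au : A \in unitmx by rewrite -hBA unitmx_mul Bunit.
have h : C *m C *m A = 1%:M.
  by rewrite -hBA !mulmxA -(mulmxA C C B) CB mulmx1 CB.
by rewrite -[invmx A]mul1mx -h -mulmxA mulmxV // mulmx1.
Qed.

Lemma qformE x : qform (invmx A) x = ((C *m x)^T *m (C *m x)) 0 0.
Proof. by rewrite /qform invA trmx_mul Ct !mulmxA. Qed.

Lemma trA_gt0 : 0 < \tr A.
Proof.
have i0 : 'I_n := @Ordinal n 0 (leq_trans (isT : (0 < 2)%N) hn).
have pos : forall i : 'I_n, 0 < A i i.
  by move=> i; rewrite -dE; exact: hA.2 _ (delta_neq0 i).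
rewrite /mxtrace (bigD1 i0) //=.
have : 0 <= \sum_(i | i != i0) A i i by apply: sumr_ge0 => i _; exact: ltW.
have := pos i0; lra.
Qed.


Lemma part2 x0 (hx : qform (invmx A) x0 = 1) (V U : 'M[R]_n) (l : 'I_n -> R) :
  x0 = 2^-1 *: \sum_i col i V -> U^T *m U = 1%:M -> (forall i, 0 < l i) ->
  (forall i, col i V = l i *: (B *m col i U)) ->
  let z := U^T *m (invmx B *m x0) in
  edge_length V = 2 ^+ n * Num.sqrt (\tr A) <->
  ((forall i, (U^T *m A *m U) i i = \tr A * z i 0 ^+ 2) /\ (forall i, l i = 2 * z i 0)).
Proof.
move=> hx0 hU hl hcol z.
pose lam := \col_i l i : 'cV[R]_n.
have hy0 : invmx B *m x0 = 2^-1 *: (U *m lam).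
  rewrite hx0 -scalemxAr mulmx_sumr mulmx_col; congr (_ *: _); apply: eq_bigr => i _.
  by rewrite hcol -scalemxAr mulmxA CB mul1mx mxE.
have hz : z = 2^-1 *: lam by rewrite /z hy0 -scalemxAr mulmxA hU mul1mx.
have hzi : forall i, z i 0 = 2^-1 * l i by move=> i; rewrite hz !mxE.
have hsum : \sum_i l i ^+ 2 = 4.
  have : (z^T *m z) 0 0 = 1.
    rewrite -hx qformE /z trmx_mul trmxK mulmxA -(mulmxA _ U) (mulmx1C hU) mulmx1 //.
  rewrite nrm2E.
  have -> : \sum_i z i 0 ^+ 2 = 4^-1 * \sum_i l i ^+ 2.
    rewrite mulr_sumr; apply: eq_bigr => i _; rewrite hzi; by field.
  move=> h; have : \sum_i l i ^+ 2 = 4 * (4^-1 * \sum_i l i ^+ 2) by field.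
  by rewrite h mulr1.
have hs := fun i => @vnorm_ge0 R n (B *m col i U).
pose s := fun i => vnorm (B *m col i U).
have hEL : edge_length V = 2 ^+ n.-1 * \sum_i l i * s i.
  rewrite /edge_length; congr (_ * _); apply: eq_bigr => i _; rewrite hcol vnormZ //; exact: ltW.
have hs2 : forall i, s i ^+ 2 = (U^T *m A *m U) i i.
  by move=> i; rewrite /s vnorm_sq (@sBU R n A B U i Bt hBA).
have hsT : \sum_i s i ^+ 2 = \tr A.
  by rewrite -(@trace_orth R n A U hU); apply: eq_bigr => i _; rewrite hs2.
have [_ hcs] := @cs_lemma R n l s _ trA_gt0 hsum hsT (fun i => ltW (hl i)) hs.
have h2n : 2 ^+ n = 2 ^+ n.-1 * (2:R) by rewrite -exprSr prednK // (leq_trans _ hn).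
rewrite hEL h2n -mulrA.
have h2 : (2:R) ^+ n.-1 != 0 by rewrite expf_neq0 // pnatr_eq0.
have hT := sqr_sqrtr (ltW trA_gt0).
split.
  move=> /(mulfI h2) /hcs hk; split => i; last by rewrite hzi; field.
  rewrite -hs2 hk hzi; move: (Num.sqrt _) hT => t ht; rewrite -ht; by field.
move=> [hd _]; congr (_ * _); apply/hcs => i.
apply/eqP; rewrite -(@eqrXn2 _ 2) //; last first.
  by apply: mulr_ge0; [apply: divr_ge0; [exact: sqrtr_ge0|] | exact: ltW].
  exact: hs.
rewrite hs2 hd hzi; apply/eqP; move: (Num.sqrt _) hT => t ht; rewrite -ht; by field.
Qed.


Lemma scaleE m p (c : R) (M : 'M[R]_(m, p)) i j : (c *: M) i j = c * M i j.
Proof. by rewrite mxE. Qed.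
Lemma trE m p (M : 'M[R]_(m, p)) i j : M^T j i = M i j.
Proof. by rewrite mxE. Qed.
Lemma mulE m p q (M : 'M[R]_(m, p)) (N : 'M[R]_(p, q)) i j :
  (M *m N) i j = \sum_k M i k * N k j.
Proof. by rewrite mxE. Qed.
Lemma addE m p (M N : 'M[R]_(m, p)) i j : (M + N) i j = M i j + N i j.
Proof. by rewrite mxE. Qed.

Lemma part1 (V : 'M[R]_n) : row_free V^T -> inscribed A V ->
  edge_length V <= 2 ^+ n * Num.sqrt (\tr A).
Proof.
move=> hfree hins.
pose W := C *m V. pose G := W^T *m W.
have hGt : G^T = G by rewrite /G trmx_mul trmxK.
have hGdef : G = W^T *m W by [].
have hWdef : W = C *m V by [].
clearbody G W.
pose sg (e : 'I_n -> bool) := \col_k ((-1) ^+ e k : R) : 'cV[R]_n.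
pose bf (x y : 'cV[R]_n) := (x^T *m G *m y) 0 0.
have hf : forall e, bf (sg e) (sg e) = 4.
  move=> e; have := hins e; rewrite qformE /vertex.
  have -> : \sum_i (-1) ^+ e i *: col i V = V *m sg e.
    by rewrite mulmx_col; apply: eq_bigr => i _; rewrite mxE.
  rewrite -!scalemxAr linearZ /= -scalemxAl !scaleE => h.
  have -> : bf (sg e) (sg e) = ((C *m (V *m sg e))^T *m (C *m (V *m sg e))) 0 0.
    by rewrite /bf hGdef hWdef !trmx_mul !mulmxA.
  move: h; move: (((C *m (V *m sg e))^T *m (C *m (V *m sg e))) 0 0) => X h.
  have -> : X = 4 * (2^-1 * (2^-1 * X)) by field.
  by rewrite h mulr1.
have bfDl : forall x y z, bf (x + y) z = bf x z + bf y z.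
  by move=> x y z; rewrite /bf linearD /= !mulmxDl addE.
have bfDr : forall x y z, bf x (y + z) = bf x y + bf x z.
  by move=> x y z; rewrite /bf mulmxDr addE.
have bfZl : forall c x z, bf (c *: x) z = c * bf x z.
  by move=> c x z; rewrite /bf linearZ /= -!scalemxAl scaleE.
have bfZr : forall c x z, bf x (c *: z) = c * bf x z.
  by move=> c x z; rewrite /bf -scalemxAr scaleE.
have bfC : forall x y, bf x y = bf y x.
  move=> x y; rewrite /bf -(@trE 1 1 (x^T *m G *m y)).
  by rewrite trmx_mul trmx_mul hGt trmxK mulmxA.
have bfe : forall i j, bf (delta_mx i 0) (delta_mx j 0) = G i j.
  by move=> i j; rewrite /bf dE.
pose s0 := sg (fun _ => false).
have e1 : forall i, sg (fun k => k == i) = s0 + (-2) *: delta_mx i 0.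
  move=> i; apply/matrixP => k c; rewrite !mxE (ord1 c) eqxx andbT.
  by case: (k == i) => /=; rewrite ?expr1 expr0; lra.
have e3 : forall i j, i != j ->
    sg (fun k => (k == i) || (k == j)) = s0 + (-2) *: delta_mx i 0 + (-2) *: delta_mx j 0.
  move=> i j hij; apply/matrixP => k c; rewrite !mxE (ord1 c) !eqxx !andbT.
  case: (eqVneq k i) => [->|hki]; first by rewrite (negbTE hij) /= expr1 expr0; lra.
  by case: (k == j) => /=; rewrite ?expr1 expr0; lra.
have offd : forall i j, i != j -> G i j = 0.
  move=> i j hij.
  have h0 := hf (fun _ => false). rewrite -/s0 in h0.
  have h1 := hf (fun k => k == i). rewrite e1 in h1.
  have h2 := hf (fun k => k == j). rewrite e1 in h2.
  have h3 := hf (fun k => (k == i) || (k == j)). rewrite e3 // in h3.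
  rewrite !(bfDl, bfDr, bfZl, bfZr) in h1 h2 h3.
  rewrite !bfe in h1 h2 h3.
  rewrite (bfC (delta_mx i 0) s0) (bfC (delta_mx j 0) s0) in h1 h2 h3.
  have hji : G j i = G i j by rewrite -(@trE n n G) hGt.
  rewrite hji in h3.
  lra.
have hdiag : \sum_i G i i = 4.
  have h0 := hf (fun _ => false); rewrite -/s0 in h0; rewrite -h0 /bf mulE.
  have s0E : forall k, s0 k 0 = 1 by move=> k; rewrite mxE expr0.
  apply: eq_bigr => k _; rewrite mulE s0E mulr1 (bigD1 k) //= big1 ?addr0.
    by rewrite trE s0E mul1r.
  by move=> l hlk; rewrite trE s0E offd // mulr0.
have hGii : forall i, G i i = \sum_k W k i ^+ 2.
  by move=> i; rewrite hGdef mxE; apply: eq_bigr => k _; rewrite mxE expr2.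
have hG0 : forall i, 0 <= G i i.
  by move=> i; rewrite hGii; apply: sumr_ge0 => k _; exact: sqr_ge0.
pose d i := Num.sqrt (G i i).
have hd2 : forall i, d i ^+ 2 = G i i by move=> i; rewrite sqr_sqrtr.
have hdpos : forall i, 0 < d i.
  move=> i; rewrite sqrtr_gt0 lt0r hG0 andbT; apply/negP => /eqP hz.
  have hW : forall k, W k i = 0.
    move=> k; apply/eqP; rewrite -sqrf_eq0; apply/eqP.
    have hs0 : \sum_k W k i ^+ 2 = 0 by rewrite -hGii hz.
    exact: (@psumr_eq0P _ _ _ _ (fun k _ => sqr_ge0 (W k i)) hs0 k isT).
  have hcolV : col i V = 0.
    have -> : V = B *m W by rewrite hWdef mulmxA BC mul1mx.
    apply/matrixP => a b; rewrite !mxE; apply: big1 => k _; by rewrite hW mulr0.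
  have hrow : (delta_mx 0 i : 'rV[R]_n) *m V^T = 0 *m V^T.
    by rewrite mul0mx -rowE -tr_col hcolV trmx0.
  have := row_free_inj hfree hrow.
  move/matrixP => /(_ 0 i); rewrite !mxE !eqxx /= => /eqP; rewrite oner_eq0 //.
have hdn0 : forall i, d i != 0 by move=> i; rewrite lt0r_neq0.
pose Q := \matrix_(k, i) (W k i / d i) : 'M[R]_n.
have hQ : Q^T *m Q = 1%:M.
  apply/matrixP => i j; rewrite !mxE.
  have -> : \sum_k Q^T i k * Q k j = G i j / (d i * d j).
    rewrite hGdef mxE mulr_suml; apply: eq_bigr => k _; rewrite !mxE.
    by field; rewrite hdn0 ?hdn0.
  case: (eqVneq i j) => [<-|hij]; first by rewrite -hd2 expr2 divff // mulf_neq0.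
  by rewrite offd // mul0r.
have hcolQ : forall i, col i V = d i *: (B *m col i Q).
  move=> i; have -> : col i Q = (d i)^-1 *: col i W.
    by apply/matrixP => a b; rewrite !mxE mulrC.
  rewrite -scalemxAr scalerA divff ?scale1r //.
  by rewrite colE mulmxA hWdef mulmxA BC mul1mx -colE.
have hs := fun i => @vnorm_ge0 R n (B *m col i Q).
pose s := fun i => vnorm (B *m col i Q).
have hEL : edge_length V = 2 ^+ n.-1 * \sum_i d i * s i.
  rewrite /edge_length; congr (_ * _); apply: eq_bigr => i _.
  rewrite hcolQ vnormZ //; exact: ltW.
have hs2 : forall i, s i ^+ 2 = (Q^T *m A *m Q) i i.
  by move=> i; rewrite /s vnorm_sq (@sBU R n A B Q i Bt hBA).
have hsT : \sum_i s i ^+ 2 = \tr A.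
  by rewrite -(@trace_orth R n A Q hQ); apply: eq_bigr => i _; rewrite hs2.
have hsum : \sum_i d i ^+ 2 = 4.
  by rewrite -hdiag; apply: eq_bigr => i _; rewrite hd2.
have [hle _] := @cs_lemma R n d s _ trA_gt0 hsum hsT (fun i => ltW (hdpos i)) hs.
have h2n : 2 ^+ n = 2 ^+ n.-1 * (2:R) by rewrite -exprSr prednK // (leq_trans _ hn).
rewrite hEL h2n -mulrA ler_wpM2l // exprn_ge0 //.
Qed.

End S.

Theorem proposition3p3 (R : rcfType) (n : nat) (A B : 'M[R]_n) (x0 : 'cV[R]_n) :
  (2 <= n)%N ->
  spd A ->
  (* B = A^{1/2}: the symmetric positive definite square root of A *)
  spd B -> B *m B = A ->
  qform (invmx A) x0 = 1 ->
  let y0 := invmx B *m x0 in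
  (* bound: every inscribed parallelepiped having x0 as a vertex *)
  (forall V : 'M[R]_n,
     row_free V^T -> inscribed A V ->
     (exists e : 'I_n -> bool, vertex V e = x0) ->
     edge_length V <= 2 ^+ n * Num.sqrt (\tr A))
  /\
  (* equality case, signs chosen so that x0 = 1/2 sum_i v_i *)
  (forall (V U : 'M[R]_n) (lambda : 'I_n -> R),
     row_free V^T -> inscribed A V ->
     x0 = 2^-1 *: \sum_i col i V ->
     orthogonal_mx U ->
     (forall i, 0 < lambda i) ->
     (forall i, col i V = lambda i *: (B *m col i U)) ->
     let z := U^T *m y0 in
     edge_length V = 2 ^+ n * Num.sqrt (\tr A) <->
     ((forall i, (U^T *m A *m U) i i = \tr A * z i 0 ^+ 2) /\
      (forall i, lambda i = 2 * z i 0))).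
Proof.
move=> hn hA hB hBA hx y0; split.
  move=> V hfree hins _; exact: (@part1 R n A B hn hA hB hBA V hfree hins).
move=> V U l _ _ hx0 hU hl hcol z.
exact: (@part2 R n A B hn hA hB hBA x0 hx V U l hx0 hU hl hcol).
Qed.
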